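(* Under the hypotheses of the context (in particular $A$ is $(c_A,\gamma_{sys})$-SED, $B$ is $(c_B,\gamma_{sys})$-SED with $c_A,c_B\ge1$, $K\in\mathcal{K}^\kappa$ is $(c_K,\gamma_{sys})$-SED and $A+BK$ is $(\tau,\rho)$-stable), let $P_i$ solve $P_i = S_i + [K]_{i:}^\top [R]_{ii}[K]_{i:} + (A+BK)^\top P_i (A+BK)$ and define $$H_{i11}=S_i + A^\top P_i A,\quad H_{i12}=A^\top P_i B,\quad H_{i22}=R_i + B^\top P_i B.$$ Then each of $H_{i11}$, $H_{i12}$, $H_{i22}$ is $(c_{H_i},\gamma_{P_i})$-SED away from $i$, where $$c_{H_i}=\max\big(\|S_i\| + N^2 c_A^2 c_{P_i},\; N^2 c_A c_B c_{P_i},\; \|R_i\| + N^2 c_B^2 c_{P_i}\big),$$ with $$c_{P_i} = \frac{\|S_i + [K]_{i:}^\top [R]_{ii}[K]_{i:}\|\,\tau^2}{1-e^{-2\rho}} + 2\big(\|[S]_{ii}\| + \|[R]_{ii}\|c_K^2\big),\qquad \gamma_{P_i} = \frac{\rho\,\gamma_{sys}}{\rho + \ln(N c_A + N^2 c_B c_K)}.$$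
   Context: $\|\cdot\|$ denotes the Euclidean norm / induced $\ell_2$ matrix norm. There are $N$ agents $[N]$ on an undirected graph with graph distance $\mathrm{dist}$ ($\mathrm{dist}(i,i)=0$, symmetric, triangle inequality). Agent $i$ has state dimension $n_i$ and input dimension $m_i$, $n=\sum_i n_i$, $m=\sum_i m_i$; matrices are partitioned into blocks $[X]_{lj}$ (rows of agent $l$, columns of agent $j$, using the $n$- or $m$-partition as appropriate); $[X]_{i:}$ is agent $i$'s block row. $A\in\mathbb{R}^{n\times n}$, $B\in\mathbb{R}^{n\times m}$, $\gamma_{sys}>0$, $\kappa\ge1$, $\mathcal{N}_i^\kappa=\{j:\mathrm{dist}(i,j)<\kappa\}$, $\mathcal{K}^\kappa=\{K\in\mathbb{R}^{m\times n}:[K]_{ij}=0 \text{ if } j\notin\mathcal{N}_i^\kappa\}$. $S$, $R$ are block-diagonal with $[S]_{ii}\succeq0$, $[R]_{ii}\succ0$; $S_i$ (resp. $R_i$) is $S$ (resp. $R$) with all blocks except the $(i,i)$ block set to zero. Definitions: $X$ is $(\tau,\rho)$-stable if $\|X^k\|\le\tau e^{-\rho k}$ for all $k\ge0$; $X$ is $(c,\gamma)$-SED if $\|[X]_{lj}\|\le c e^{-\gamma\,\mathrm{dist}(l,j)}$ for all $l,j$; $X$ is $(c,\gamma)$-SED away from $i$ if $\|[X]_{lj}\|\le c e^{-\gamma\max(\mathrm{dist}(i,l),\mathrm{dist}(i,j))}$ for all $l,j$. *)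

(* Defs.v *)
From HB Require Import structures.
From mathcomp Require Import all_boot all_order all_algebra.
From mathcomp Require Import all_classical all_reals all_analysis.
Set Implicit Arguments. Unset Strict Implicit. Unset Printing Implicit Defensive.
Import Order.TTheory GRing.Theory Num.Theory.
Local Open Scope classical_set_scope.
Local Open Scope ring_scope.

Section Defs.
Variable R : realType.

Definition vnorm (q : nat) (v : 'cV[R]_q) : R := Num.sqrt (\sum_k (v k 0) ^+ 2).

Definition opnorm (p q : nat) (X : 'M[R]_(p, q)) : R :=
  sup [set vnorm (X *m v) | v in [set v : 'cV[R]_q | vnorm v <= 1]].

Definition mx_stable (n : nat) (tau rho : R) (X : 'M[R]_n) : Prop :=
  forall k : nat, opnorm (X ^+ k) <= tau * expR (- rho * k%:R).

(* Matrices partitioned according to p_ (rows) and q_ (columns) over N agents.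
   Blocks [X]_{lj} are MathComp's submxblock. *)
Definition SED (N : nat) (dist : 'I_N -> 'I_N -> nat) (p_ q_ : 'I_N -> nat)
    (X : 'M[R]_((\sum_i p_ i)%N, (\sum_i q_ i)%N)) (c gamma : R) : Prop :=
  forall l j : 'I_N, opnorm (submxblock X l j) <= c * expR (- gamma * (dist l j)%:R).

Definition SED_away (N : nat) (dist : 'I_N -> 'I_N -> nat) (p_ q_ : 'I_N -> nat)
    (i : 'I_N) (X : 'M[R]_((\sum_i p_ i)%N, (\sum_i q_ i)%N)) (c gamma : R) : Prop :=
  forall l j : 'I_N, opnorm (submxblock X l j)
    <= c * expR (- gamma * (maxn (dist i l) (dist i j))%:R).

Definition block_diag (N : nat) (p_ : 'I_N -> nat)
    (X : 'M[R]_((\sum_i p_ i)%N, (\sum_i p_ i)%N)) : Prop :=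
  forall l j : 'I_N, l != j -> submxblock X l j = 0.

Definition keep_block (N : nat) (p_ : 'I_N -> nat) (i : 'I_N)
    (X : 'M[R]_((\sum_i p_ i)%N, (\sum_i p_ i)%N)) : 'M[R]_((\sum_i p_ i)%N) :=
  \mxblock_(l, j) (if (l == i) && (j == i) then submxblock X l j else 0).

Definition psd (q : nat) (X : 'M[R]_q) : Prop :=
  X^T = X /\ forall v : 'cV[R]_q, 0 <= (v^T *m X *m v) 0 0.
Definition pd (q : nat) (X : 'M[R]_q) : Prop :=
  X^T = X /\ forall v : 'cV[R]_q, v != 0 -> 0 < (v^T *m X *m v) 0 0.

Definition in_Kkappa (N : nat) (dist : 'I_N -> 'I_N -> nat) (kappa : nat)
    (m_ n_ : 'I_N -> nat) (K : 'M[R]_((\sum_i m_ i)%N, (\sum_i n_ i)%N)) : Prop :=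
  forall i j : 'I_N, (kappa <= dist i j)%N -> submxblock K i j = 0.

End Defs.

Arguments SED {R N} dist {p_ q_} X c gamma.
Arguments SED_away {R N} dist {p_ q_} i X c gamma.
Arguments in_Kkappa {R N} dist kappa {m_ n_} K.
Arguments keep_block {R N p_} i X.
Arguments block_diag {R N p_} X.

(* Main.v *)
Require Import Defs.
From HB Require Import structures.
From mathcomp Require Import all_boot all_order all_algebra.
From mathcomp Require Import all_classical all_reals all_analysis.
From mathcomp Require Import ring lra zify.
Import Order.TTheory GRing.Theory Num.Theory.
Set Implicit Arguments. Unset Strict Implicit. Unset Printing Implicit Defensive.
Local Open Scope ring_scope.


Section Norms.
Variable R : realType.

Lemma vnorm_ge0 q (v : 'cV[R]_q) : 0 <= vnorm v.
Proof. exact: sqrtr_ge0. Qed.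

Lemma vnorm_sqr q (v : 'cV[R]_q) : vnorm v ^+ 2 = \sum_k (v k 0) ^+ 2.
Proof. by rewrite /vnorm sqr_sqrtr // sumr_ge0 // => k _; exact: sqr_ge0. Qed.

Lemma CS q (a b : 'I_q -> R) :
  (\sum_k a k * b k) ^+ 2 <= (\sum_k a k ^+ 2) * (\sum_k b k ^+ 2).
Proof.
set A := \sum_k a k ^+ 2; set B := \sum_k b k ^+ 2; set C := \sum_k a k * b k.
have B0 : 0 <= B by rewrite sumr_ge0 // => k _; exact: sqr_ge0.
have A0 : 0 <= A by rewrite sumr_ge0 // => k _; exact: sqr_ge0.
have key : 0 <= B * (A * B - C ^+ 2).
  have -> : B * (A * B - C ^+ 2) = \sum_k (B * a k - C * b k) ^+ 2.
    rewrite (eq_bigr (fun k => B ^+ 2 * a k ^+ 2 - (2 * B * C) * (a k * b k)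
       + C ^+ 2 * b k ^+ 2)); last by move=> k _; ring.
    rewrite big_split /= sumrB -!mulr_sumr -/A -/B -/C; ring.
  by rewrite sumr_ge0 // => k _; exact: sqr_ge0.
have [Bz|Bp] := eqVneq B 0.
  have bz : forall k, b k = 0.
    move=> k; apply/eqP; rewrite -sqrf_eq0; apply/eqP.
    by apply: (psumr_eq0P _ Bz) => // j _; exact: sqr_ge0.
  have -> : C = 0 by rewrite /C big1 // => k _; rewrite bz mulr0.
  by rewrite Bz expr0n /= mulr0.
have Bpos : 0 < B by rewrite lt_def Bp B0.
rewrite -subr_ge0; move: key; rewrite pmulr_rge0 //.
Qed.

Lemma dot_le q (u v : 'cV[R]_q) : \sum_k u k 0 * v k 0 <= vnorm u * vnorm v.
Proof.
have h := CS (fun k => u k 0) (fun k => v k 0).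
rewrite -!vnorm_sqr -exprMn in h.
have := vnorm_ge0 u; have := vnorm_ge0 v.
set x := \sum_k _; set y := vnorm u * vnorm v => h1 h2.
have y0 : 0 <= y by rewrite mulr_ge0.
apply: (le_trans (ler_norm x)); rewrite -sqrtr_sqr -(ger0_norm y0) -sqrtr_sqr.
by rewrite ler_sqrt // sqr_ge0.
Qed.

Lemma vnorm_add q (u v : 'cV[R]_q) : vnorm (u + v) <= vnorm u + vnorm v.
Proof.
rewrite {1}/vnorm -(ger0_norm (addr_ge0 (vnorm_ge0 u) (vnorm_ge0 v))) -sqrtr_sqr.
rewrite ler_sqrt; last exact: sqr_ge0.
rewrite (eq_bigr (fun k => u k 0 ^+ 2 + 2 * (u k 0 * v k 0) + v k 0 ^+ 2));
  last by move=> k _; rewrite !mxE; ring.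
rewrite !big_split /= -mulr_sumr -!vnorm_sqr.
have := dot_le u v; lra.
Qed.

Lemma vnorm_scale q (a : R) (v : 'cV[R]_q) : vnorm (a *: v) = `|a| * vnorm v.
Proof.
rewrite /vnorm (eq_bigr (fun k => a ^+ 2 * v k 0 ^+ 2)); last by move=> k _; rewrite mxE exprMn.
by rewrite -mulr_sumr sqrtrM ?sqr_ge0 // sqrtr_sqr.
Qed.

Lemma vnorm0 q : vnorm (0 : 'cV[R]_q) = 0.
Proof. by rewrite /vnorm big1 ?sqrtr0 // => k _; rewrite mxE expr0n. Qed.

Lemma vnorm_eq0 q (v : 'cV[R]_q) : vnorm v = 0 -> v = 0.
Proof.
move=> h; have h2 : \sum_k v k 0 ^+ 2 = 0 by rewrite -vnorm_sqr h expr0n.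
apply/matrixP => k j; rewrite (ord1 j) mxE; apply/eqP; rewrite -sqrf_eq0; apply/eqP.
by apply: (psumr_eq0P _ h2) => // l _; exact: sqr_ge0.
Qed.

Lemma sumsq_ge0 q (a : 'I_q -> R) : 0 <= \sum_k a k ^+ 2.
Proof. by rewrite sumr_ge0 // => k _; exact: sqr_ge0. Qed.

Lemma sumsq2_ge0 p q (X : 'M[R]_(p, q)) : 0 <= \sum_i \sum_k X i k ^+ 2.
Proof. by rewrite sumr_ge0 // => i _; exact: sumsq_ge0. Qed.

Definition fro p q (X : 'M[R]_(p, q)) := Num.sqrt (\sum_i \sum_k X i k ^+ 2).

Lemma vnorm_mul_fro p q (X : 'M[R]_(p, q)) v : vnorm (X *m v) <= fro X * vnorm v.
Proof.
rewrite /vnorm /fro -sqrtrM; last exact: sumsq2_ge0.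
rewrite ler_sqrt; last by rewrite mulr_ge0 ?sumsq2_ge0 ?sumsq_ge0.
rewrite mulr_suml; apply: ler_sum => i _; rewrite mxE.
exact: CS (fun k => X i k) (fun k => v k 0).
Qed.

Definition oset p q (X : 'M[R]_(p, q)) :=
  [set vnorm (X *m v) | v in [set v : 'cV[R]_q | vnorm v <= 1]]%classic.

Lemma oset_sup p q (X : 'M[R]_(p, q)) : has_sup (oset X).
Proof.
split; first by exists (vnorm (X *m 0)), 0 => //=; rewrite vnorm0 ler01.
exists (fro X) => _ [v /= hv <-].
apply: (le_trans (vnorm_mul_fro X v)).
by rewrite ler_piMr ?sqrtr_ge0.
Qed.

Lemma opnorm_ub p q (X : 'M[R]_(p, q)) v : vnorm v <= 1 -> vnorm (X *m v) <= opnorm X.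
Proof. by move=> hv; apply: (sup_upper_bound (oset_sup X)); exists v. Qed.

Lemma opnorm_ge0 p q (X : 'M[R]_(p, q)) : 0 <= opnorm X.
Proof.
have := opnorm_ub X (v := 0); rewrite vnorm0 mulmx0 vnorm0; apply; exact: ler01.
Qed.

Lemma opnorm_le p q (X : 'M[R]_(p, q)) c :
  (forall v, vnorm v <= 1 -> vnorm (X *m v) <= c) -> opnorm X <= c.
Proof.
move=> h; apply: ge_sup; first by exists (vnorm (X *m 0)), 0 => //=; rewrite vnorm0 ler01.
by move=> _ [v /= hv <-]; exact: h.
Qed.

Lemma opnorm_mulv p q (X : 'M[R]_(p, q)) v : vnorm (X *m v) <= opnorm X * vnorm v.
Proof.
have [z|nz] := eqVneq (vnorm v) 0.
  by rewrite z mulr0 (vnorm_eq0 z) mulmx0 vnorm0.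
have vp : 0 < vnorm v by rewrite lt_def nz vnorm_ge0.
have h := opnorm_ub X (v := (vnorm v)^-1 *: v).
rewrite vnorm_scale ger0_norm ?invr_ge0 ?vnorm_ge0 // mulVf // lexx in h.
have := h isT; rewrite -scalemxAr vnorm_scale ger0_norm ?invr_ge0 ?vnorm_ge0 //.
by rewrite ler_pdivrMl // mulrC.
Qed.

Lemma opnorm_mul p q r (X : 'M[R]_(p, q)) (Y : 'M[R]_(q, r)) :
  opnorm (X *m Y) <= opnorm X * opnorm Y.
Proof.
apply: opnorm_le => v hv; rewrite -mulmxA.
apply: (le_trans (opnorm_mulv _ _)); apply: ler_wpM2l; first exact: opnorm_ge0.
apply: (le_trans (opnorm_mulv _ _)).
by apply: ler_piMr; [exact: opnorm_ge0|].
Qed.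

Lemma opnorm_add p q (X Y : 'M[R]_(p, q)) : opnorm (X + Y) <= opnorm X + opnorm Y.
Proof.
apply: opnorm_le => v hv; rewrite mulmxDl.
by apply: (le_trans (vnorm_add _ _)); apply: lerD; exact: opnorm_ub.
Qed.

Lemma opnorm0 p q : opnorm (0 : 'M[R]_(p, q)) = 0.
Proof.
apply/le_anti; rewrite opnorm_ge0 andbT; apply: opnorm_le => v _.
by rewrite mul0mx vnorm0.
Qed.

Lemma opnorm_sum p q (I : finType) (F : I -> 'M[R]_(p, q)) :
  opnorm (\sum_k F k) <= \sum_k opnorm (F k).
Proof.
apply: (big_ind2 (fun X c => opnorm X <= c)); first by rewrite opnorm0.
  by move=> X1 c1 X2 c2 h1 h2; apply: (le_trans (opnorm_add _ _)); exact: lerD.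
by [].
Qed.

Lemma opnorm_tr p q (X : 'M[R]_(p, q)) : opnorm X^T <= opnorm X.
Proof.
apply: opnorm_le => v hv.
set w := X^T *m v.
have e : vnorm w ^+ 2 <= opnorm X * vnorm w * vnorm v.
  rewrite vnorm_sqr.
  have -> : \sum_k w k 0 ^+ 2 = \sum_k (X *m w) k 0 * v k 0.
    rewrite (eq_bigr (fun k => \sum_j w k 0 * (X j k * v j 0))); last first.
      move=> k _; rewrite expr2 {2}/w mxE mulr_sumr; apply: eq_bigr => j _; rewrite mxE //.
    rewrite exchange_big /=; apply: eq_bigr => j _; rewrite mxE mulr_suml.
    by apply: eq_bigr => k _; ring.
  apply: (le_trans (dot_le _ _)); apply: ler_wpM2r; first exact: vnorm_ge0.
  exact: opnorm_mulv.
have := vnorm_ge0 w; have := vnorm_ge0 v; have := opnorm_ge0 X.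
set a := vnorm w; set o := opnorm X; set b := vnorm v => h0 h1 h2.
have : a <= o * b.
  have [az|anz] := eqVneq a 0; first by rewrite az mulr_ge0.
  have ap : 0 < a by rewrite lt_def anz h2.
  rewrite -(ler_pM2l ap); have -> : a * (o * b) = o * a * b by ring.
  by rewrite -expr2.
move=> h; apply: (le_trans h); apply: ler_piMr => //.
Qed.

End Norms.


Section Blocks.
Variable R : realType.

Definition Sel m' m (f : 'I_m' -> 'I_m) : 'M[R]_(m', m) := \matrix_(i, k) (f i == k)%:R.

Lemma mxsub_sel p q p' q' (f : 'I_p' -> 'I_p) (g : 'I_q' -> 'I_q) (X : 'M[R]_(p, q)) :
  mxsub f g X = Sel f *m X *m (Sel g)^T.
Proof.
apply/matrixP => i j; rewrite !mxE.
rewrite (bigD1 (g j)) //= big1 ?addr0; last first.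
  by move=> k hk; rewrite !mxE eq_sym (negbTE hk) mulr0.
rewrite !mxE eqxx mulr1 (bigD1 (f i)) //= big1 ?addr0; last first.
  by move=> k hk; rewrite !mxE eq_sym (negbTE hk) mul0r.
by rewrite !mxE eqxx mul1r.
Qed.

Lemma opnorm_sel m' m (f : 'I_m' -> 'I_m) : injective f -> opnorm (Sel f) <= 1.
Proof.
move=> finj; apply: opnorm_le => v hv; apply: le_trans hv.
rewrite /vnorm ler_sqrt; last exact: sumsq_ge0.
have -> : \sum_k (Sel f *m v) k 0 ^+ 2 = \sum_k v (f k) 0 ^+ 2.
  apply: eq_bigr => k _; rewrite !mxE (bigD1 (f k)) //= big1 ?addr0; last first.
    by move=> l hl; rewrite !mxE eq_sym (negbTE hl) mul0r.
  by rewrite !mxE eqxx mul1r.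
rewrite -(big_imset (fun k => v k 0 ^+ 2) (h := f) (A := predT)) /=; last first.
  by move=> x y _ _; exact: finj.
rewrite [X in _ <= X](bigID (fun k => k \in [set f x | x in predT])) /=.
by rewrite lerDl sumr_ge0 // => k _; exact: sqr_ge0.
Qed.

Lemma opnorm_mxsub p q p' q' (f : 'I_p' -> 'I_p) (g : 'I_q' -> 'I_q) (X : 'M[R]_(p, q)) :
  injective f -> injective g -> opnorm (mxsub f g X) <= opnorm X.
Proof.
move=> fi gi; rewrite mxsub_sel.
apply: (le_trans (opnorm_mul _ _)).
have h1 := opnorm_sel fi; have h2 := le_trans (opnorm_tr (Sel g)) (opnorm_sel gi).
have := opnorm_ge0 X; have := opnorm_ge0 (Sel f); have := opnorm_ge0 (Sel g)^T.
have := opnorm_mul (Sel f) X.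
set a := opnorm (Sel f); set b := opnorm X; set c := opnorm (Sel g)^T.
set d := opnorm (Sel f *m X) => hd h3 h4 h5.
have d0 : 0 <= d := opnorm_ge0 _.
apply: (le_trans (ler_piMr d0 h2)); apply: (le_trans hd).
by apply: ler_piMl.
Qed.

Variables (N : nat) (p_ q_ r_ : 'I_N -> nat).
Notation sp := (\sum_i p_ i)%N.
Notation sq := (\sum_i q_ i)%N.
Notation sr := (\sum_i r_ i)%N.

Lemma Rank_inj (l : 'I_N) (p__ : 'I_N -> nat) : injective (@tagnat.Rank N p__ l).
Proof.
move=> x y /eqP; rewrite -val_eqE /= tagnat.eq_Rank eqxx /= => /eqP h.
exact: val_inj.
Qed.

Lemma bl_le (X : 'M[R]_(sp, sq)) l j : opnorm (submxblock X l j) <= opnorm X.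
Proof. by rewrite /submxblock; apply: opnorm_mxsub; exact: Rank_inj. Qed.

Lemma bl_mul (X : 'M[R]_(sp, sq)) (Y : 'M[R]_(sq, sr)) l j :
  submxblock (X *m Y) l j = \sum_k submxblock X l k *m submxblock Y k j.
Proof.
rewrite -{1}(submxblockK X) -{1}(submxblockK Y).
rewrite mul_mxblock mxblockK //.
Qed.

Lemma bl_tr (X : 'M[R]_(sp, sq)) l j : submxblock X^T l j = (submxblock X j l)^T.
Proof. by apply/matrixP => k m; rewrite !mxE. Qed.

End Blocks.


Section Exps.
Variable R : realType.
Definition E (g : R) (x : nat) := expR (- g * x%:R).

Lemma E_gt0 g x : 0 < E g x. Proof. exact: expR_gt0. Qed.
Lemma E_ge0 g x : 0 <= E g x. Proof. exact: ltW (E_gt0 g x). Qed.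

Lemma E_add g x y : E g (x + y) = E g x * E g y.
Proof. by rewrite /E -expRD natrD; congr expR; ring. Qed.

Lemma E0 g : E g 0 = 1. Proof. by rewrite /E mulr0 expR0. Qed.

Lemma E_anti g x y : 0 <= g -> (y <= x)%N -> E g x <= E g y.
Proof.
move=> g0 hxy; rewrite /E ler_expR.
have : (y%:R <= x%:R :> R) by rewrite ler_nat.
nra.
Qed.

Lemma E_gmono g g' x : 0 <= g' -> g' <= g -> E g x <= E g' x.
Proof.
move=> g0 hg; rewrite /E ler_expR.
have : (0 <= x%:R :> R) by rewrite ler0n.
nra.
Qed.

Lemma sum_const_le (N : nat) (F : 'I_N -> R) c :
  (forall k, F k <= c) -> \sum_k F k <= N%:R * c.
Proof.
move=> h; apply: (le_trans (ler_sum _ (fun k _ => h k))).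
by rewrite sumr_const card_ord mulr_natl.
Qed.

End Exps.

Section SEDs.
Variable R : realType.
Variables (N : nat) (dist : 'I_N -> 'I_N -> nat).
Hypothesis d0 : forall j, dist j j = 0%N.
Hypothesis dsym : forall j l, dist j l = dist l j.
Hypothesis dtri : forall j l r, (dist j r <= dist j l + dist l r)%N.
Variable g : R.
Hypothesis g0 : 0 <= g.

Lemma SED_c0 p_ q_ (X : 'M[R]_((\sum_i p_ i)%N, (\sum_i q_ i)%N)) c (l : 'I_N) :
  SED dist X c g -> 0 <= c.
Proof.
move=> h; have := le_trans (opnorm_ge0 (submxblock X l l)) (h l l).
by rewrite pmulr_lge0 // E_gt0.
Qed.

Lemma SED_add p_ q_ (X Y : 'M[R]_((\sum_i p_ i)%N, (\sum_i q_ i)%N)) a b :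
  SED dist X a g -> SED dist Y b g -> SED dist (X + Y) (a + b) g.
Proof.
move=> hX hY l j; rewrite submxblockD.
apply: (le_trans (opnorm_add _ _)); rewrite mulrDl; exact: lerD.
Qed.

Lemma opnorm_bl_mul p_ q_ r_ (X : 'M[R]_((\sum_i p_ i)%N, (\sum_i q_ i)%N))
  (Y : 'M[R]_((\sum_i q_ i)%N, (\sum_i r_ i)%N)) (l j : 'I_N) :
  opnorm (submxblock (X *m Y) l j) <=
  \sum_(k < N) opnorm (submxblock X l k) * opnorm (submxblock Y k j).
Proof.
rewrite bl_mul; apply: (le_trans (opnorm_sum _)); apply: ler_sum => k _.
exact: opnorm_mul.
Qed.

Lemma SED_mul p_ q_ r_ (X : 'M[R]_((\sum_i p_ i)%N, (\sum_i q_ i)%N))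
  (Y : 'M[R]_((\sum_i q_ i)%N, (\sum_i r_ i)%N)) a b :
  0 <= a -> 0 <= b ->
  SED dist X a g -> SED dist Y b g -> SED dist (X *m Y) (N%:R * a * b) g.
Proof.
move=> a0 b0 hX hY l j; apply: (le_trans (opnorm_bl_mul _ _ _ _)).
rewrite -!mulrA; apply: sum_const_le => k.
apply: (le_trans (ler_pM (opnorm_ge0 _) (opnorm_ge0 _) (hX l k) (hY k j))).
have := E_anti g0 (dtri l k j); rewrite E_add => h.
have := E_ge0 g (dist l k); have := E_ge0 g (dist k j); have := mulr_ge0 a0 b0.
set u := E g (dist l k); set w := E g (dist k j); set z := E g (dist l j) => *.
have -> : a * u * (b * w) = (a * b) * (u * w) by ring.
by rewrite mulrA; apply: ler_wpM2l.
Qed.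

Lemma SED_pow p_ (M : 'M[R]_((\sum_i p_ i)%N)) c :
  0 <= c -> SED dist M c g -> forall k, SED dist (M ^+ k.+1) (c * (N%:R * c) ^+ k) g.
Proof.
move=> c0 hM; elim=> [|k IH]; first by rewrite expr1 expr0 mulr1.
rewrite exprSr -mulmxE.
have -> : c * (N%:R * c) ^+ k.+1 = N%:R * (c * (N%:R * c) ^+ k) * c.
  by rewrite exprSr; ring.
apply: SED_mul => //; by rewrite mulr_ge0 // exprn_ge0 // mulr_ge0.
Qed.

Variable i : 'I_N.

Definition Qb p_ (X : 'M[R]_((\sum_i p_ i)%N)) q0 :=
  forall a b : 'I_N, opnorm (submxblock X a b) <= q0 * E g (dist i a + dist i b).

Lemma sand_mid p_ (X Q : 'M[R]_((\sum_i p_ i)%N)) a q0 (l k : 'I_N) :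
  0 <= a -> 0 <= q0 -> SED dist X a g -> Qb Q q0 ->
  opnorm (submxblock (X^T *m Q) l k) <= N%:R * (a * q0 * E g (dist i l + dist i k)).
Proof.
move=> a0 q00 hX hQ; apply: (le_trans (opnorm_bl_mul _ _ _ _)).
apply: sum_const_le => r; rewrite bl_tr.
apply: (le_trans (ler_pM (opnorm_ge0 _) (opnorm_ge0 _) (le_trans (opnorm_tr _) (hX r l)) (hQ r k))).
have : (dist i l + dist i k <= dist r l + (dist i r + dist i k))%N.
  by have := dtri i r l; lia.
move=> /(E_anti g0); rewrite !E_add => h.
have := E_ge0 g (dist r l); have := E_ge0 g (dist i r); have := E_ge0 g (dist i k).
have := E_ge0 g (dist i l).
set u := E g (dist r l); set w := E g (dist i r); set z := E g (dist i k) => *.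
have -> : a * u * (q0 * (w * z)) = (a * q0) * (u * (w * z)) by ring.
by apply: ler_wpM2l => //; rewrite mulr_ge0.
Qed.

Lemma sandwich p_ (X Q : 'M[R]_((\sum_i p_ i)%N)) a q0 :
  0 <= a -> 0 <= q0 -> SED dist X a g -> Qb Q q0 ->
  Qb (X^T *m Q *m X) (N%:R ^+ 2 * a ^+ 2 * q0).
Proof.
move=> a0 q00 hX hQ l j; apply: (le_trans (opnorm_bl_mul _ _ _ _)).
have -> : N%:R ^+ 2 * a ^+ 2 * q0 * E g (dist i l + dist i j) =
   N%:R * (N%:R * (a * q0) * a * E g (dist i l + dist i j)) by ring.
apply: sum_const_le => k.
apply: (le_trans (ler_pM (opnorm_ge0 _) (opnorm_ge0 _) (sand_mid l k a0 q00 hX hQ) (hX k j))).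
have : (dist i l + dist i j <= (dist i l + dist i k) + dist k j)%N.
  by have := dtri i k j; lia.
move=> /(E_anti g0); rewrite !E_add => h.
have := E_ge0 g (dist i l); have := E_ge0 g (dist i k); have := E_ge0 g (dist k j).
have N0 : (0 <= N%:R :> R) by rewrite ler0n.
set u := E g (dist i l); set w := E g (dist i k); set z := E g (dist k j) => *.
have -> : N%:R * (a * q0 * (u * w)) * (a * z) = (N%:R * (a * q0) * a) * (u * w * z) by ring.
by apply: ler_wpM2l => //; rewrite !mulr_ge0.
Qed.

Variable gP : R.
Hypothesis gP0 : 0 <= gP.
Hypothesis gPg : gP <= g.

Lemma hand_mid p_ q_ (X : 'M[R]_((\sum_i p_ i)%N, (\sum_i q_ i)%N)) (P : 'M[R]_((\sum_i p_ i)%N))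
   a cP (l k : 'I_N) :
  0 <= a -> 0 <= cP -> SED dist X a g -> SED_away dist i P cP gP ->
  opnorm (submxblock (X^T *m P) l k) <= N%:R * (a * cP * E gP (maxn (dist i l) (dist i k))).
Proof.
move=> a0 c0 hX hP; apply: (le_trans (opnorm_bl_mul _ _ _ _)).
apply: sum_const_le => r; rewrite bl_tr.
apply: (le_trans (ler_pM (opnorm_ge0 _) (opnorm_ge0 _) (le_trans (opnorm_tr _) (hX r l)) (hP r k))).
have h1 := E_gmono (dist r l) gP0 gPg.
have : (maxn (dist i l) (dist i k) <= dist r l + maxn (dist i r) (dist i k))%N.
  by have := dtri i r l; lia.
move=> /(E_anti gP0); rewrite !E_add => h.
have := E_ge0 g (dist r l); have := E_ge0 gP (dist r l).
have := E_ge0 gP (maxn (dist i r) (dist i k)).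
set u := E g (dist r l); set u' := E gP (dist r l); set w := E gP (maxn _ _) => *.
have -> : a * u * (cP * w) = (a * cP) * (u * w) by ring.
apply: ler_wpM2l => //; first by rewrite mulr_ge0.
apply: le_trans h; exact: ler_wpM2r.
Qed.

Lemma hand p_ q_ r_ (X : 'M[R]_((\sum_i p_ i)%N, (\sum_i q_ i)%N)) (P : 'M[R]_((\sum_i p_ i)%N))
   (Y : 'M[R]_((\sum_i p_ i)%N, (\sum_i r_ i)%N)) a b cP (l j : 'I_N) :
  0 <= a -> 0 <= b -> 0 <= cP -> SED dist X a g -> SED dist Y b g -> SED_away dist i P cP gP ->
  opnorm (submxblock (X^T *m P *m Y) l j) <=
     N%:R ^+ 2 * a * b * cP * E gP (maxn (dist i l) (dist i j)).
Proof.
move=> a0 b0 c0 hX hY hP; apply: (le_trans (opnorm_bl_mul _ _ _ _)).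
have -> : N%:R ^+ 2 * a * b * cP * E gP (maxn (dist i l) (dist i j)) =
   N%:R * (N%:R * (a * cP) * b * E gP (maxn (dist i l) (dist i j))) by ring.
apply: sum_const_le => k.
apply: (le_trans (ler_pM (opnorm_ge0 _) (opnorm_ge0 _) (hand_mid l k a0 c0 hX hP) (hY k j))).
have h1 := E_gmono (dist k j) gP0 gPg.
have : (maxn (dist i l) (dist i j) <= maxn (dist i l) (dist i k) + dist k j)%N.
  by have := dtri i k j; lia.
move=> /(E_anti gP0); rewrite !E_add => h.
have := E_ge0 gP (maxn (dist i l) (dist i k)); have := E_ge0 g (dist k j).
have := E_ge0 gP (dist k j).
have N0 : (0 <= N%:R :> R) by rewrite ler0n.
set u := E gP (maxn _ _); set z := E g (dist k j); set z' := E gP (dist k j) => *.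
have -> : N%:R * (a * cP * u) * (b * z) = (N%:R * (a * cP) * b) * (u * z) by ring.
apply: ler_wpM2l; first by rewrite !mulr_ge0.
apply: le_trans h; exact: ler_wpM2l.
Qed.

End SEDs.


Section Iter.
Variable R : realType.

Lemma geo_sum (s : R) k0 m : 0 <= s -> s < 1 ->
  \sum_(k0 <= k < k0 + m) s ^+ k <= s ^+ k0 / (1 - s).
Proof.
move=> s0 s1.
have e : (1 - s) * \sum_(k0 <= k < k0 + m) s ^+ k = s ^+ k0 - s ^+ (k0 + m).
  elim: m => [|m IH]; first by rewrite addn0 big_geq // mulr0 subrr.
  rewrite addnS big_nat_recr /=; last by rewrite leq_addr.
  by rewrite mulrDr IH exprS; ring.
have p : 0 < 1 - s by rewrite subr_gt0.
rewrite ler_pdivlMr // mulrC e gerBl exprn_ge0 //.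
Qed.

Lemma limit_trick (x b C g : R) k0 : 0 < g -> 0 <= C ->
  (forall n, (k0 <= n)%N -> x <= b + C * E g n) -> x <= b.
Proof.
move=> g0 C0 h; apply/ler_addgt0Pr => e e0.
set t := C / (g * e).
set n := maxn k0 (Num.Def.trunc t).+1.
have hn := h n (leq_maxl _ _).
apply: (le_trans hn); rewrite lerD2l.
have tn : t < n%:R.
  apply: (lt_le_trans (truncnS_gt t)); rewrite ler_nat; exact: leq_maxr.
have En : E g n * (1 + g * n%:R) <= 1.
  rewrite mulrC; apply: (le_trans (ler_wpM2r (E_ge0 g n) (expR_ge1Dx (g * n%:R)))).
  by rewrite /E mulNr expRxMexpNx_1.
have ge0 : 0 < g * e by rewrite mulr_gt0.
have Ct : C = t * (g * e) by rewrite /t divfK // gt_eqF.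
rewrite Ct.
have E0 := E_ge0 g n.
have h3 : t * (g * e) <= n%:R * (g * e) := ler_wpM2r (ltW ge0) (ltW tn).
have g0' := ltW g0.
nra.
Qed.

Lemma opnorm_sumn p q (F : nat -> 'M[R]_(p, q)) a b :
  opnorm (\sum_(a <= k < b) F k) <= \sum_(a <= k < b) opnorm (F k).
Proof.
apply: (big_ind2 (fun X c => opnorm X <= c)); first by rewrite opnorm0.
  by move=> X1 c1 X2 c2 h1 h2; apply: (le_trans (opnorm_add _ _)); exact: lerD.
by [].
Qed.

Variable n : nat.
Variables (M Q P : 'M[R]_n).
Hypothesis hP : P = Q + M^T *m P *m M.

Definition T k := (M ^+ k)^T *m Q *m M ^+ k.

Lemma iterP m : P = \sum_(0 <= k < m) T k + (M ^+ m)^T *m P *m M ^+ m.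
Proof.
elim: m => [|m IH]; first by rewrite big_geq // add0r expr0 trmx1 mul1mx mulmx1.
rewrite big_nat_recr //= -addrA {1}IH; congr (_ + _).
rewrite [in LHS]hP /T mulmxDr mulmxDl; congr (_ + _).
by rewrite exprS -!mulmxE trmx_mul !mulmxA.
Qed.

Variables (tau rho : R).
Hypothesis rho0 : 0 < rho.
Hypothesis hst : mx_stable tau rho M.

Lemma stab k : opnorm (M ^+ k) <= tau * E rho k.
Proof. exact: hst. Qed.

Lemma tau0 : 0 <= tau.
Proof.
have := le_trans (opnorm_ge0 _) (stab 0); rewrite pmulr_lge0 //; exact: E_gt0.
Qed.

Lemma T_bound k : opnorm (T k) <= opnorm Q * tau ^+ 2 * E (2 * rho) k.
Proof.
have h1 := le_trans (opnorm_tr _) (stab k).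
have h2 := stab k.
have e : E (2 * rho) k = E rho k * E rho k.
  by rewrite /E -expRD; congr expR; ring.
apply: (le_trans (opnorm_mul _ _)).
apply: (le_trans (ler_wpM2r (opnorm_ge0 _) (opnorm_mul _ _))).
have := opnorm_ge0 (M ^+ k)^T; have := opnorm_ge0 Q; have := opnorm_ge0 (M ^+ k).
have := E_ge0 rho k; have := tau0.
rewrite e; set a := opnorm (M ^+ k)^T; set q := opnorm Q; set b := opnorm (M ^+ k).
set u := E rho k => *.
have -> : q * tau ^+ 2 * (u * u) = (tau * u) * q * (tau * u) by ring.
apply: ler_pM => //; first by rewrite mulr_ge0.
apply: ler_pM => //.
Qed.

Lemma tail_bound k0 :
  forall m, (k0 <= m)%N ->
  opnorm (\sum_(k0 <= k < m) T k + (M ^+ m)^T *m P *m M ^+ m) <=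
  opnorm Q * tau ^+ 2 * (E (2 * rho) k0 / (1 - E (2 * rho) 1)) +
  (tau ^+ 2 * opnorm P) * E (2 * rho) m.
Proof.
move=> m hm; apply: (le_trans (opnorm_add _ _)); apply: lerD.
  apply: (le_trans (opnorm_sumn _ _ _)).
  apply: (le_trans (ler_sum _ (fun k _ => T_bound k))).
  rewrite -mulr_sumr ler_wpM2l //; first by rewrite mulr_ge0 ?opnorm_ge0 // sqr_ge0.
  have eE : forall k, E (2 * rho) k = E (2 * rho) 1 ^+ k.
    by move=> k; rewrite /E -expRM_natr; congr expR; ring.
  rewrite (eq_bigr (fun k => E (2 * rho) 1 ^+ k)); last by move=> k _; exact: eE.
  rewrite (eE k0) -(subnKC hm); apply: geo_sum; first exact: E_ge0.
  by rewrite /E expR_lt1 mulr1 oppr_lt0 mulr_gt0.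
apply: (le_trans (opnorm_mul _ _)).
apply: (le_trans (ler_wpM2r (opnorm_ge0 _) (opnorm_mul _ _))).
have h1 := le_trans (opnorm_tr _) (stab m).
have h2 := stab m.
have e : E (2 * rho) m = E rho m * E rho m.
  by rewrite /E -expRD; congr expR; ring.
have := opnorm_ge0 (M ^+ m)^T; have := opnorm_ge0 P; have := opnorm_ge0 (M ^+ m).
have := E_ge0 rho m; have := tau0.
rewrite e; set a := opnorm (M ^+ m)^T; set q := opnorm P; set b := opnorm (M ^+ m).
set u := E rho m => *.
have -> : tau ^+ 2 * q * (u * u) = (tau * u) * q * (tau * u) by ring.
apply: ler_pM => //; first by rewrite mulr_ge0.
apply: ler_pM => //.
Qed.

End Iter.


Section Arith.
Variable R : realType.

Lemma geo2 (x : R) m : 2 <= x -> \sum_(0 <= k < m.+1) x ^+ k <= 2 * x ^+ m.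
Proof.
move=> x2; elim: m => [|m IH]; first by rewrite big_nat1 expr0 mulr1 ler1n.
rewrite big_nat_recr //=; apply: (le_trans (lerD IH (lexx _))).
have x0 : 0 <= x ^+ m by rewrite exprn_ge0 // (le_trans _ x2).
rewrite exprS -subr_ge0.
have -> : 2 * (x * x ^+ m) - (2 * x ^+ m + x * x ^+ m) = (x - 2) * x ^+ m by ring.
by rewrite mulr_ge0 // subr_ge0.
Qed.

Variables (g rho L : R) (D : nat).
Hypothesis g0 : 0 < g.
Hypothesis rho0 : 0 < rho.
Hypothesis L1 : 1 <= L.

Lemma lL0 : 0 <= ln L. Proof. exact: ln_ge0 L1. Qed.
Lemma den0 : 0 < rho + ln L. Proof. have := lL0; have := rho0; lra. Qed.
Definition gPf := rho * g / (rho + ln L).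
Definition tf := g * D%:R / (2 * (rho + ln L)).

Lemma gPf_ge0 : 0 <= gPf.
Proof. apply: divr_ge0; [apply: mulr_ge0; apply: ltW; [exact: rho0|exact: g0] | exact: ltW den0]. Qed.

Lemma gPf_le : gPf <= g.
Proof.
rewrite /gPf ler_pdivrMr; last exact: den0.
have := lL0; have := rho0; have := g0; nra.
Qed.

Lemma tf_ge0 : 0 <= tf.
Proof.
apply: divr_ge0; first by apply: mulr_ge0; [exact: ltW g0|exact: ler0n].
by apply: mulr_ge0; [exact: ler0n|exact: ltW den0].
Qed.

Lemma choose_a : (L ^+ 2) ^+ (Num.Def.trunc tf) * E g D <= E gPf D.
Proof.
have Lp : 0 < L by rewrite (lt_le_trans ltr01).
rewrite -{1}(lnK Lp) -exprM -expRM_natl /E -expRD ler_expR.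
have ht : (Num.Def.trunc tf)%:R <= tf by rewrite truncn_le tf_ge0.
have hl := lL0.
have e : 2 * tf * ln L - g * D%:R = - gPf * D%:R.
  by rewrite /tf /gPf; field; rewrite gt_eqF // den0.
have := g0; have := rho0.
have : (2%:R : R) * (Num.Def.trunc tf)%:R * ln L <= 2 * tf * ln L.
  by rewrite ler_wpM2r // ler_wpM2l.
nra.
Qed.

Lemma choose_b : E (2 * rho) (Num.Def.trunc tf).+1 <= E gPf D.
Proof.
rewrite /E ler_expR.
have ht := truncnS_gt tf.
have e : 2 * rho * tf = gPf * D%:R.
  by rewrite /tf /gPf; field; rewrite gt_eqF // den0.
have := g0; have := rho0.
nra.
Qed.

End Arith.


Section PB.
Variable R : realType.
Variables (N : nat) (dist : 'I_N -> 'I_N -> nat).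
Hypothesis d0 : forall j, dist j j = 0%N.
Hypothesis dsym : forall j l, dist j l = dist l j.
Hypothesis dtri : forall j l r, (dist j r <= dist j l + dist l r)%N.
Variable p_ : 'I_N -> nat.
Variables (M Q P : 'M[R]_((\sum_i p_ i)%N)).
Hypothesis hP : P = Q + M^T *m P *m M.
Variables (tau rho g c q0 : R).
Hypothesis rho0 : 0 < rho.
Hypothesis hst : mx_stable tau rho M.
Hypothesis g0 : 0 < g.
Hypothesis c1 : 1 <= c.
Hypothesis q00 : 0 <= q0.
Variable i : 'I_N.
Hypothesis hM : SED dist M c g.
Hypothesis hQ : Qb dist g i Q q0.

Lemma bl_sumn (F : nat -> 'M[R]_((\sum_i p_ i)%N)) a b (l j : 'I_N) :
  opnorm (submxblock (\sum_(a <= k < b) F k) l j) <= \sum_(a <= k < b) opnorm (submxblock (F k) l j).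
Proof.
apply: (big_ind2 (fun X c => opnorm (submxblock X l j) <= c)); first by rewrite submxblock0 opnorm0.
  move=> X1 c1' X2 c2 h1 h2; rewrite submxblockD.
  by apply: (le_trans (opnorm_add _ _)); exact: lerD.
by [].
Qed.

Lemma P_k0 k0 (l j : 'I_N) :
  opnorm (submxblock P l j) <= \sum_(0 <= k < k0) opnorm (submxblock (T M Q k) l j) +
    opnorm Q * tau ^+ 2 * (E (2 * rho) k0 / (1 - E (2 * rho) 1)).
Proof.
have r2 : 0 < 2 * rho by rewrite mulr_gt0.
have C0 : 0 <= tau ^+ 2 * opnorm P by rewrite mulr_ge0 ?sqr_ge0 ?opnorm_ge0.
apply: (limit_trick (k0 := k0) r2 C0) => n hn.
rewrite {1}(iterP hP n) (@big_cat_nat _ _ _ k0 0 n _ _ (leq0n k0) hn) /= -addrA submxblockD -addrA.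
apply: (le_trans (opnorm_add _ _)); apply: lerD; first exact: bl_sumn.
apply: (le_trans (bl_le _ _ _)); exact: tail_bound.
Qed.

Lemma Qb_T k : Qb dist g i (T M Q k) (((N%:R * c) ^+ 2) ^+ k * q0).
Proof.
case: k => [|k].
  by rewrite /T expr0 trmx1 mul1mx mulmx1 expr0 mul1r.
have c0 : 0 <= c by rewrite (le_trans ler01).
have := sandwich dtri (ltW g0) (a := c * (N%:R * c) ^+ k) _ q00 (SED_pow dtri (ltW g0) c0 hM k) hQ.
have -> : N%:R ^+ 2 * (c * (N%:R * c) ^+ k) ^+ 2 * q0 = ((N%:R * c) ^+ 2) ^+ k.+1 * q0.
  rewrite [in RHS]exprSr [in RHS]exprAC [in RHS]mulrC.
  set z := (N%:R * c) ^+ k. ring.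
apply; by rewrite mulr_ge0 // exprn_ge0 // mulr_ge0.
Qed.

Lemma P_away :
  SED_away dist i P (opnorm Q * tau ^+ 2 / (1 - expR (- 2 * rho)) + 2 * q0)
    (gPf g rho (N%:R * c)).
Proof.
move=> l j.
set D := maxn (dist i l) (dist i j).
set L := N%:R * c.
set A0 := opnorm Q * tau ^+ 2 / (1 - expR (- 2 * rho)).
change (opnorm (submxblock P l j) <= (A0 + 2 * q0) * E (gPf g rho L) D).
have es : E (2 * rho) 1 = expR (- 2 * rho) by rewrite /E; congr expR; ring.
have A00 : 0 <= A0.
  apply: divr_ge0; first by rewrite mulr_ge0 ?opnorm_ge0 ?sqr_ge0.
  rewrite subr_ge0 -es /E expR_le1 mulr1 oppr_le0; apply: ltW; exact: mulr_gt0.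
have N1 : (1 <= N)%N by case: N i => // [[]].
have L1 : 1 <= L.
  by rewrite /L; apply: (le_trans c1); rewrite ler_peMl ?ler1n // (le_trans ler01 c1).
have hk : forall k0, opnorm (submxblock P l j) <=
    (\sum_(0 <= k < k0) (L ^+ 2) ^+ k) * q0 * E g (dist i l + dist i j) +
    A0 * E (2 * rho) k0.
  move=> k0; apply: (le_trans (P_k0 k0 l j)); apply: lerD.
    rewrite mulr_suml mulr_suml; apply: ler_sum => k _.
    exact: Qb_T.
  rewrite /A0 -es le_eqVlt; apply/orP; left; apply/eqP; ring.
have [Dz|Dp] := eqVneq D 0%N.
  apply: (le_trans (hk 0%N)); rewrite big_geq // mul0r mul0r add0r E0 Dz E0 mulr1 mulr1.
  by rewrite lerDl mulr_ge0.
have N2 : (2 <= N)%N.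
  have : (0 < dist i l)%N || (0 < dist i j)%N.
    move: Dp; rewrite /D; case: (ltnP 0 (dist i l)) => h //= h'.
    by move: h' h; rewrite -lt0n leqn0 => + /eqP e; rewrite e max0n.
  case/orP => h.
    have : l != i by apply/eqP => e; move: h; rewrite e d0.
    rewrite -val_eqE /= neq_ltn => /orP[] h1; have := ltn_ord l; have := ltn_ord i; lia.
  have : j != i by apply/eqP => e; move: h; rewrite e d0.
  rewrite -val_eqE /= neq_ltn => /orP[] h1; have := ltn_ord j; have := ltn_ord i; lia.
have L2 : 2 <= L.
  rewrite /L; apply: (le_trans (y := N%:R)); first by rewrite ler_nat.
  by rewrite ler_peMr ?ler0n.
set tr := Num.Def.trunc (tf g rho L D).
apply: (le_trans (hk tr.+1)).
have ha := choose_a D g0 rho0 L1.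
have hb := choose_b D g0 rho0 L1.
have hs := geo2 tr L2.
have hL : 2 <= L ^+ 2.
  by rewrite expr2; apply: (le_trans L2); rewrite ler_peMl // (le_trans _ L2).
have := geo2 tr hL.
have hSD : E g (dist i l + dist i j) <= E g D.
  by apply: E_anti; [exact: ltW|rewrite /D; lia].
have := E_ge0 g (dist i l + dist i j); have := E_ge0 g D.
have := E_ge0 (gPf g rho L) D; have := E_ge0 (2 * rho) tr.+1.
have := exprn_ge0 tr (le_trans (ler0n _ 2) hL).
set X := \sum_(0 <= k < tr.+1) _; set Y := (L ^+ 2) ^+ tr.
set e1 := E g (dist i l + dist i j); set e2 := E g D; set e3 := E _ D; set e4 := E _ tr.+1.
move=> Y0 e40 e30 e20 e10 hX.
have X0 : 0 <= X by rewrite sumr_ge0 // => k _; rewrite exprn_ge0 // (le_trans _ hL).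
have h1 : X * q0 * e1 <= 2 * q0 * e3.
  apply: (le_trans (y := 2 * Y * q0 * e2)).
    apply: ler_pM; [by rewrite mulr_ge0| by []| |by []].
    by apply: ler_pM.
  have -> : 2 * Y * q0 * e2 = 2 * q0 * (Y * e2) by ring.
  by apply: ler_wpM2l; [rewrite mulr_ge0|].
have h2 : A0 * e4 <= A0 * e3 by apply: ler_wpM2l.
have := lerD h1 h2; move=> h3; apply: (le_trans h3).
by have -> : (A0 + 2 * q0) * e3 = 2 * q0 * e3 + A0 * e3 by ring.
Qed.

End PB.


Lemma keep_bound (R : realType) (N : nat) (dist : 'I_N -> 'I_N -> nat) (p_ : 'I_N -> nat)
  (d0 : forall j, dist j j = 0%N) (i : 'I_N) (X : 'M[R]_((\sum_i p_ i)%N)) (g : R) (f : nat -> nat)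
  (f0 : f 0%N = 0%N) (l j : 'I_N) :
  opnorm (submxblock (keep_block i X) l j) <=
  opnorm (submxblock X i i) * E g (f (maxn (dist i l) (dist i j))).
Proof.
have e : submxblock (keep_block i X) l j =
  if (l == i) && (j == i) then submxblock X l j else 0 by rewrite /keep_block mxblockK.
rewrite e; case: eqP => [->|_] /=; last by rewrite opnorm0 mulr_ge0 ?opnorm_ge0 ?E_ge0.
case: eqP => [->|_] /=; last by rewrite opnorm0 mulr_ge0 ?opnorm_ge0 ?E_ge0.
by rewrite d0 maxnn f0 E0 mulr1.
Qed.

Lemma bl_quad (R : realType) (N : nat) (n_ m_ : 'I_N -> nat)
  (K : 'M[R]_((\sum_i m_ i)%N, (\sum_i n_ i)%N)) (i : 'I_N) (W : 'M[R]_(m_ i)) (a b : 'I_N) :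
  submxblock ((submxcol K i)^T *m W *m submxcol K i) a b =
  (submxblock K i a)^T *m W *m submxblock K i b.
Proof.
apply/matrixP => x y; rewrite !mxE; apply: eq_bigr => k _; rewrite !mxE; congr (_ * _).
by apply: eq_bigr => k' _; rewrite !mxE.
Qed.

Unset Implicit Arguments. Set Strict Implicit.
Theorem corollary1 (R : realType) (N : nat) (dist : 'I_N -> 'I_N -> nat)
  (n_ m_ : 'I_N -> nat)
  (A : 'M[R]_((\sum_i n_ i)%N, (\sum_i n_ i)%N))
  (B : 'M[R]_((\sum_i n_ i)%N, (\sum_i m_ i)%N))
  (K : 'M[R]_((\sum_i m_ i)%N, (\sum_i n_ i)%N))
  (S : 'M[R]_((\sum_i n_ i)%N, (\sum_i n_ i)%N))
  (Rm : 'M[R]_((\sum_i m_ i)%N, (\sum_i m_ i)%N))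
  (gamma_sys c_A c_B c_K tau rho : R) (kappa : nat) (i : 'I_N)
  (P : 'M[R]_((\sum_i n_ i)%N, (\sum_i n_ i)%N)) :
  (forall j, dist j j = 0%N) ->
  (forall j l, dist j l = dist l j) ->
  (forall j l r, (dist j r <= dist j l + dist l r)%N) ->
  0 < gamma_sys -> (1 <= kappa)%N ->
  block_diag S -> block_diag Rm ->
  (forall j, psd (submxblock S j j)) -> (forall j, pd (submxblock Rm j j)) ->
  1 <= c_A -> 1 <= c_B ->
  SED dist A c_A gamma_sys -> SED dist B c_B gamma_sys ->
  in_Kkappa dist kappa K -> SED dist K c_K gamma_sys ->
  0 < rho -> mx_stable tau rho (A + B *m K) ->
  let Si := keep_block i S in
  let Ri := keep_block i Rm in
  let Ki := submxcol K i in
  let Q := Si + Ki^T *m submxblock Rm i i *m Ki in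
  P = Q + (A + B *m K)^T *m P *m (A + B *m K) ->
  let c_P := opnorm Q * tau ^+ 2 / (1 - expR (- 2 * rho))
             + 2 * (opnorm (submxblock S i i) + opnorm (submxblock Rm i i) * c_K ^+ 2) in
  let gamma_P := rho * gamma_sys / (rho + ln (N%:R * c_A + N%:R ^+ 2 * c_B * c_K)) in
  let c_H := Num.max (opnorm Si + N%:R ^+ 2 * c_A ^+ 2 * c_P)
               (Num.max (N%:R ^+ 2 * c_A * c_B * c_P)
                        (opnorm Ri + N%:R ^+ 2 * c_B ^+ 2 * c_P)) in
  SED_away dist i (Si + A^T *m P *m A) c_H gamma_P /\
  SED_away dist i (A^T *m P *m B) c_H gamma_P /\
  SED_away dist i (Ri + B^T *m P *m B) c_H gamma_P.
Proof.
move=> d0 dsym dtri g0 _ _ _ _ _ cA1 cB1 hA hB _ hK hrho hst Si Ri Ki Q hP c_P gamma_P c_H.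
have g0' := ltW g0.
have cK0 : 0 <= c_K := SED_c0 i hK.
have cA0 : 0 <= c_A by rewrite (le_trans ler01).
have cB0 : 0 <= c_B by rewrite (le_trans ler01).
set c := c_A + N%:R * c_B * c_K.
have hM : SED dist (A + B *m K) c gamma_sys.
  by apply: SED_add => //; apply: SED_mul.
have c1 : 1 <= c.
  by rewrite /c -[X in X <= _]addr0 lerD // !mulr_ge0 ?ler0n.
set q0 := opnorm (submxblock S i i) + opnorm (submxblock Rm i i) * c_K ^+ 2.
have q00 : 0 <= q0 by rewrite addr_ge0 ?mulr_ge0 ?opnorm_ge0 ?sqr_ge0.
have hQ : Qb dist gamma_sys i Q q0.
  move=> a b; rewrite /Q submxblockD.
  apply: (le_trans (opnorm_add _ _)); rewrite /q0 mulrDl; apply: lerD.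
    have := keep_bound d0 i S gamma_sys (f := fun x => (x + x)%N) (erefl _) a b.
    move/le_trans; apply; apply: ler_wpM2l; first exact: opnorm_ge0.
    apply: E_anti => //; lia.
  rewrite /Ki bl_quad.
  apply: (le_trans (opnorm_mul _ _)).
  apply: (le_trans (ler_wpM2r (opnorm_ge0 _) (opnorm_mul _ _))).
  have h1 := le_trans (opnorm_tr _) (hK i a).
  have h2 := hK i b.
  rewrite E_add.
  have := E_ge0 gamma_sys (dist i a); have := E_ge0 gamma_sys (dist i b).
  have := opnorm_ge0 (submxblock Rm i i).
  have := opnorm_ge0 (submxblock K i a)^T; have := opnorm_ge0 (submxblock K i b).
  set x := opnorm (submxblock K i a)^T; set y := opnorm (submxblock K i b).
  set r := opnorm (submxblock Rm i i).
  set ea := E gamma_sys (dist i a); set eb := E gamma_sys (dist i b) => *.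
  have -> : r * c_K ^+ 2 * (ea * eb) = (c_K * ea) * r * (c_K * eb) by ring.
  apply: ler_pM => //; first by rewrite mulr_ge0.
  exact: ler_pM.
have hPa := P_away d0 dtri hP hrho hst g0 c1 q00 hM hQ.
have eL : N%:R * c = N%:R * c_A + N%:R ^+ 2 * c_B * c_K by rewrite /c; ring.
rewrite eL -/gamma_P in hPa.
have N1 : (1 <= N)%N by have := ltn_ord i; lia.
have L1 : 1 <= N%:R * c.
  by apply: (le_trans c1); rewrite ler_peMl ?ler1n // (le_trans ler01 c1).
have gP0 : 0 <= gamma_P by rewrite /gamma_P -eL; exact: gPf_ge0.
have gPg : gamma_P <= gamma_sys by rewrite /gamma_P -eL; exact: gPf_le.
have cP0 : 0 <= c_P.
  rewrite /c_P addr_ge0 //; last by rewrite mulr_ge0 // -/q0.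
  apply: divr_ge0; first by rewrite mulr_ge0 ?opnorm_ge0 ?sqr_ge0.
  rewrite subr_ge0 expR_le1; have := hrho; lra.
have hPa' : SED_away dist i P c_P gamma_P by [].
have x1 : opnorm Si + N%:R ^+ 2 * c_A ^+ 2 * c_P <= c_H by rewrite /c_H le_max lexx.
have x2 : N%:R ^+ 2 * c_A * c_B * c_P <= c_H by rewrite /c_H !le_max lexx orbT.
have x3 : opnorm Ri + N%:R ^+ 2 * c_B ^+ 2 * c_P <= c_H by rewrite /c_H !le_max lexx !orbT.
split; [|split] => l j.
- change (opnorm (submxblock (Si + A^T *m P *m A) l j) <=
     c_H * E gamma_P (maxn (dist i l) (dist i j))).
  rewrite submxblockD; apply: (le_trans (opnorm_add _ _)).
  apply: le_trans (ler_wpM2r (E_ge0 _ _) x1); rewrite mulrDl; apply: lerD.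
    have := keep_bound d0 i S gamma_P (f := id) (erefl _) l j.
    move/le_trans; apply; apply: ler_wpM2r; [exact: E_ge0|].
    rewrite /Si; have := bl_le (keep_block i S) i i.
    by rewrite /keep_block mxblockK !eqxx.
  have -> : N%:R ^+ 2 * c_A ^+ 2 * c_P = N%:R ^+ 2 * c_A * c_A * c_P by ring.
  exact: (hand dtri g0' gP0 gPg l j cA0 cA0 cP0 hA hA hPa').
- change (opnorm (submxblock (A^T *m P *m B) l j) <=
     c_H * E gamma_P (maxn (dist i l) (dist i j))).
  apply: le_trans (ler_wpM2r (E_ge0 _ _) x2).
  exact: (hand dtri g0' gP0 gPg l j cA0 cB0 cP0 hA hB hPa').
- change (opnorm (submxblock (Ri + B^T *m P *m B) l j) <=
     c_H * E gamma_P (maxn (dist i l) (dist i j))).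
  rewrite submxblockD; apply: (le_trans (opnorm_add _ _)).
  apply: le_trans (ler_wpM2r (E_ge0 _ _) x3); rewrite mulrDl; apply: lerD.
    have := keep_bound d0 i Rm gamma_P (f := id) (erefl _) l j.
    move/le_trans; apply; apply: ler_wpM2r; [exact: E_ge0|].
    rewrite /Ri; have := bl_le (keep_block i Rm) i i.
    by rewrite /keep_block mxblockK !eqxx.
  have -> : N%:R ^+ 2 * c_B ^+ 2 * c_P = N%:R ^+ 2 * c_B * c_B * c_P by ring.
  exact: (hand dtri g0' gP0 gPg l j cB0 cB0 cP0 hB hB hPa').
Qed.
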